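(* Let $V$ be a proper (i.e. non-unitary) isometry on an infinite-dimensional separable Hilbert space and let $k\in\mathbb{N}$. Then $\overline{\Lambda_k(V)}=\overline{\mathbb{D}}$.
   Context: $\mathbb{D}=\{z\in\mathbb{C}:|z|<1\}$. For $T\in\mathcal{B}(\mathcal{L})$ and $k\in\mathbb{N}$, $\Lambda_k(T)=\{\lambda\in\mathbb{C}: PTP=\lambda P\text{ for some orthogonal projection } P \text{ of rank } k\}$. *)

(* Defs.v *)
From HB Require Import structures.
From mathcomp Require Import all_boot all_order all_algebra.
From mathcomp Require Import reals complex.
Set Implicit Arguments. Unset Strict Implicit. Unset Printing Implicit Defensive.
Import Order.TTheory GRing.Theory Num.Theory.
Local Open Scope ring_scope.
Local Open Scope complex_scope.

Section Hilbert.
Variables (R : realType) (H : lmodType R[i]) (ip : H -> H -> R[i]).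

Definition is_inner_product : Prop :=
  [/\ forall (a : R[i]) (x y z : H), ip (a *: x + y) z = a * ip x z + ip y z,
      forall x y : H, ip x y = (ip y x)^*,
      forall x : H, 0 <= ip x x
    & forall x : H, ip x x = 0 -> x = 0].

Definition hnorm (x : H) : R[i] := sqrtC (ip x x).

Definition cauchy_seq (u : nat -> H) : Prop :=
  forall e : R[i], 0 < e -> exists N : nat,
    forall m n : nat, (N <= m)%N -> (N <= n)%N -> hnorm (u m - u n) < e.

Definition converges_to (u : nat -> H) (l : H) : Prop :=
  forall e : R[i], 0 < e -> exists N : nat,
    forall n : nat, (N <= n)%N -> hnorm (u n - l) < e.

Definition complete_space : Prop :=
  forall u : nat -> H, cauchy_seq u -> exists l : H, converges_to u l.

Definition separable_space : Prop :=
  exists d : nat -> H, forall (x : H) (e : R[i]), 0 < e ->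
    exists n : nat, hnorm (x - d n) < e.

Definition lin_indep (n : nat) (v : 'I_n -> H) : Prop :=
  forall c : 'I_n -> R[i], \sum_(j < n) c j *: v j = 0 -> forall j, c j = 0.

Definition infinite_dimensional : Prop :=
  forall n : nat, exists v : 'I_n -> H, lin_indep v.

Definition inf_dim_separable_Hilbert : Prop :=
  [/\ is_inner_product, complete_space, separable_space & infinite_dimensional].

Definition is_linear_op (T : H -> H) : Prop :=
  forall (a : R[i]) (x y : H), T (a *: x + y) = a *: T x + T y.

Definition bounded_op (T : H -> H) : Prop :=
  is_linear_op T /\ exists M : R[i], forall x : H, hnorm (T x) <= M * hnorm x.

Definition isometry (V : H -> H) : Prop :=
  bounded_op V /\ forall x : H, hnorm (V x) = hnorm x.

Definition unitary (V : H -> H) : Prop :=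
  isometry V /\ forall y : H, exists x : H, V x = y.

Definition proper_isometry (V : H -> H) : Prop := isometry V /\ ~ unitary V.

Definition orth_projection (P : H -> H) : Prop :=
  [/\ is_linear_op P, forall x : H, P (P x) = P x
    & forall x y : H, ip (P x) y = ip x (P y)].

Definition has_rank (P : H -> H) (k : nat) : Prop :=
  exists v : 'I_k -> H,
    [/\ lin_indep v,
        forall j, exists x : H, P x = v j
      & forall x : H, exists c : 'I_k -> R[i], P x = \sum_(j < k) c j *: v j].

Definition higher_rank_num_range (k : nat) (T : H -> H) (lam : R[i]) : Prop :=
  exists P : H -> H, [/\ orth_projection P, has_rank P k
    & forall x : H, P (T (P x)) = lam *: P x].

End Hilbert.

Definition in_closure (R : realType) (S : R[i] -> Prop) (z : R[i]) : Prop :=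
  forall e : R[i], 0 < e -> exists w : R[i], S w /\ `|z - w| < e.

(* Main.v *)
Require Import Defs.
From HB Require Import structures.
From mathcomp Require Import all_boot all_order all_algebra.
From mathcomp Require Import ring lra zify.
From mathcomp Require Import reals complex.
From Stdlib Require Import Classical.
Set Implicit Arguments. Unset Strict Implicit. Unset Printing Implicit Defensive.
Import Order.TTheory GRing.Theory Num.Theory.
Local Open Scope ring_scope.
Local Open Scope complex_scope.
Local Notation Re := (complex.Re).
Local Notation Im := (complex.Im).


Section IP.
Variables (R : realType) (H : lmodType R[i]) (ip : H -> H -> R[i]).
Hypothesis IP : is_inner_product ip.

Lemma ipDl x y z : ip (x + y) z = ip x z + ip y z.
Proof. by case: IP => h _ _ _; have := h 1 x y z; rewrite scale1r mul1r. Qed.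

Lemma ip0l z : ip 0 z = 0.
Proof. by have := ipDl 0 0 z; rewrite addr0 => /eqP; rewrite -subr_eq subrr eq_sym => /eqP. Qed.

Lemma ipZl a x z : ip (a *: x) z = a * ip x z.
Proof. by case: IP => h _ _ _; have := h a x 0 z; rewrite addr0 ip0l addr0. Qed.

Lemma ipC x y : ip x y = (ip y x)^*.
Proof. by case: IP. Qed.

Lemma ipNl x z : ip (- x) z = - ip x z.
Proof. by rewrite -scaleN1r ipZl mulN1r. Qed.

Lemma ipBl x y z : ip (x - y) z = ip x z - ip y z.
Proof. by rewrite ipDl ipNl. Qed.

Lemma ipDr x y z : ip x (y + z) = ip x y + ip x z.
Proof. by rewrite [LHS]ipC ipDl rmorphD (ipC x y) (ipC x z). Qed.

Lemma ipZr (a : R[i]) x z : ip x (a *: z) = conjc a * ip x z.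
Proof. by rewrite [LHS]ipC ipZl rmorphM (ipC x z). Qed.

Lemma ip0r z : ip z 0 = 0.
Proof. by rewrite ipC ip0l rmorph0. Qed.

Lemma ipNr x z : ip x (- z) = - ip x z.
Proof. by rewrite [LHS]ipC ipNl rmorphN (ipC x z). Qed.

Lemma ipBr x y z : ip x (y - z) = ip x y - ip x z.
Proof. by rewrite ipDr ipNr. Qed.

Lemma ip_suml n (F : 'I_n -> H) z : ip (\sum_(j < n) F j) z = \sum_(j < n) ip (F j) z.
Proof.
elim: n F => [|n IH] F; first by rewrite !big_ord0 ip0l.
by rewrite !big_ord_recr /= ipDl IH.
Qed.

Lemma ip_sumr n (F : 'I_n -> H) z : ip z (\sum_(j < n) F j) = \sum_(j < n) ip z (F j).
Proof.
elim: n F => [|n IH] F; first by rewrite !big_ord0 ip0r.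
by rewrite !big_ord_recr /= ipDr IH.
Qed.

Definition nsqd (x : H) : R := Re (ip x x).

Lemma ipxx x : ip x x = (nsqd x)%:C.
Proof.
case: IP => _ _ h _; have := h x; rewrite lecE /nsqd.
by case: (ip x x) => a b /= /andP[/eqP -> _].
Qed.

Lemma nsq_ge0 x : 0 <= nsqd x.
Proof. by case: IP => _ _ h _; have := h x; rewrite ipxx lecR. Qed.

Lemma nsq_eq0 x : nsqd x = 0 -> x = 0.
Proof. by case: IP => _ _ _ h e; apply: h; rewrite ipxx e. Qed.

Lemma hnorm_lt u (e : R[i]) : 0 < e -> (hnorm ip u < e) = (nsqd u < (Re e) ^+ 2).
Proof.
move=> e0.
have ee : e = (Re e)%:C by move: e0; rewrite ltcE; case: e => a b /= /andP[/eqP -> _].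
have re0 : 0 < Re e by move: e0; rewrite {1}ee ltcR.
rewrite /hnorm ipxx {1}ee -(@sqrCK _ (Re e)%:C); last by rewrite lecR ltW.
rewrite ltr_sqrtC ?qualifE /= ?lecR ?nsq_ge0 ?exprn_ge0 ?ltW //.
rewrite -rmorphXn /= ltcR //.
by rewrite -ee.
Qed.

End IP.

Section Iso.
Variables (R : realType) (H : lmodType R[i]) (ip : H -> H -> R[i]).
Hypothesis IP : is_inner_product ip.
Variable V : H -> H.
Hypothesis iso : Defs.isometry ip V.

Lemma VL a x y : V (a *: x + y) = a *: V x + V y. Proof. by case: iso => [[h _] _]; apply: h. Qed.
Lemma V0 : V 0 = 0.
Proof.
have h := VL 1 0 0; rewrite !scale1r addr0 in h.
by apply/(addrI (V 0)); rewrite addr0 -h.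
Qed.
Lemma VD x y : V (x + y) = V x + V y. Proof. by have := VL 1 x y; rewrite !scale1r. Qed.
Lemma VZ a x : V (a *: x) = a *: V x. Proof. by have := VL a x 0; rewrite !addr0 V0 addr0. Qed.
Lemma VN x : V (- x) = - V x. Proof. by rewrite -scaleN1r VZ scaleN1r. Qed.
Lemma VB x y : V (x - y) = V x - V y. Proof. by rewrite VD VN. Qed.
Lemma V_sum n (F : 'I_n -> H) : V (\sum_(j < n) F j) = \sum_(j < n) V (F j).
Proof.
elim: n F => [|n IH] F; first by rewrite !big_ord0 V0.
by rewrite !big_ord_recr /= VD IH.
Qed.

Lemma ipVV x : ip (V x) (V x) = ip x x.
Proof. by case: iso => _ h; have := congr1 (fun t => t ^+ 2) (h x); rewrite /hnorm !sqrtCK. Qed.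

Lemma ipV x y : ip (V x) (V y) = ip x y.
Proof.
have h1 := ipVV (x + y); have h2 := ipVV (x + 'i *: y).
rewrite VD !(ipDl IP) !(ipDr IP) !ipVV in h1.
rewrite VD VZ !(ipDl IP) !(ipDr IP) !(ipZl IP) !(ipZr IP) !ipVV in h2.
move: h1 h2; generalize (ip (V x) (V y)) (ip (V y) (V x)) (ip x y) (ip y x) (ip x x) (ip y y).
move=> A B a b X Y h1 h2.
have ci : conjc 'i = -'i :> R[i] by apply/eqP; rewrite eq_complex /= oppr0 !eqxx.
rewrite ci in h2.
have : 2 * (A - a) = (X + A + (B + Y) - (X + a + (b + Y))) +
   'i * ((X + -'i * A + ('i * B + 'i * (-'i * Y))) - (X + -'i * a + ('i * b + 'i * (-'i * Y))))
   + (1 + 'i^+2) * (A - B - a + b) by ring.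
rewrite h1 h2 !subrr mulr0 addr0 sqr_i subrr mul0r addr0 => /eqP.
by rewrite mulf_eq0 pnatr_eq0 /= subr_eq0 => /eqP.
Qed.
End Iso.

Section ReLemmas.
Variable R : realType.
Implicit Types a b c : R[i].
Lemma ReD a b : Re (a + b) = Re a + Re b. Proof. by case: a; case: b. Qed.
Lemma ReN a : Re (- a) = - Re a. Proof. by case: a. Qed.
Lemma ReC (r : R) : Re r%:C = r. Proof. by []. Qed.
Lemma ReJ a : Re (conjc a) = Re a. Proof. by case: a. Qed.
Lemma ReMr (r : R) a : Re (r%:C * a) = r * Re a.
Proof. by case: a => x y /=; simpc. Qed.
Lemma mulcJ a : a * conjc a = ((Re a) ^+ 2 + (Im a) ^+ 2)%:C.
Proof. by case: a => x y /=; simpc; apply/eqP; rewrite eq_complex /=; apply/andP; split; apply/eqP; ring. Qed.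
Lemma conjcM a b : conjc (a * b) = conjc a * conjc b. Proof. exact: rmorphM. Qed.
Lemma conjcD a b : conjc (a + b) = conjc a + conjc b. Proof. exact: rmorphD. Qed.
Lemma realCM (x y : R) : (x * y)%:C = x%:C * y%:C :> R[i]. Proof. exact: rmorphM. Qed.
Lemma realCD (x y : R) : (x + y)%:C = x%:C + y%:C :> R[i]. Proof. exact: rmorphD. Qed.
Lemma realCB (x y : R) : (x - y)%:C = x%:C - y%:C :> R[i]. Proof. exact: rmorphB. Qed.
Lemma realCX (x : R) n : (x ^+ n)%:C = x%:C ^+ n :> R[i]. Proof. exact: rmorphXn. Qed.
Lemma conjcR (r : R) : conjc r%:C = r%:C.
Proof. by rewrite /= oppr0. Qed.

Lemma eventually_small (e : R) : 0 < e -> exists N, forall n, (N <= n)%N -> (n.+1%:R)^-1 < e.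
Proof.
move=> e0; exists (Num.Def.archi_bound e^-1) => n hn.
have h : e^-1 < (Num.Def.archi_bound e^-1)%:R by apply: archi_boundP; rewrite invr_ge0 ltW.
have h2 : e^-1 < n.+1%:R.
  by apply: (lt_le_trans h); rewrite ler_nat; apply: leq_trans hn _.
rewrite -(invrK e) ltf_pV2 // ?posrE ?invr_gt0 ?ltr0Sn //.
Qed.
End ReLemmas.

Section NSQ.
Variables (R : realType) (H : lmodType R[i]) (ip : H -> H -> R[i]).
Hypothesis IP : is_inner_product ip.
Local Notation nsq := (nsqd ip).

Lemma nsqD u v : nsq (u + v) = nsq u + nsq v + 2 * Re (ip u v).
Proof.
rewrite /nsqd (ipDl IP) !(ipDr IP) (ipC IP v u) !ReD ReJ.
rewrite -/(nsqd ip u) -/(nsqd ip v); ring.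
Qed.

Lemma nsqN u : nsq (- u) = nsq u.
Proof. by rewrite /nsqd (ipNl IP) (ipNr IP) opprK. Qed.

Lemma Re_ipNr u v : Re (ip u (- v)) = - Re (ip u v).
Proof. by rewrite (ipNr IP) ReN. Qed.

Lemma Re_ipZl (r : R) u v : Re (ip (r%:C *: u) v) = r * Re (ip u v).
Proof. by rewrite (ipZl IP) ReMr. Qed.

Lemma nsqB u v : nsq (u - v) = nsq u + nsq v - 2 * Re (ip u v).
Proof. rewrite nsqD nsqN Re_ipNr; ring. Qed.

Lemma nsqZ (r : R) u : nsq (r%:C *: u) = r ^+ 2 * nsq u.
Proof.
rewrite /nsqd (ipZl IP) (ipZr IP) conjcR (ipxx IP) -!rmorphM /=.
ring.
Qed.

Lemma nsq_sum2 u : nsq (u + u) = 4%:R * nsq u.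
Proof. rewrite nsqD /nsqd (ipxx IP) ReC -/(nsqd ip u); ring. Qed.

Lemma parallelogram u v : nsq (u - v) + nsq (u + v) = 2 * nsq u + 2 * nsq v.
Proof. rewrite nsqB nsqD; ring. Qed.

Lemma amgm (d : R) u v : 0 < d -> nsq (u + v) <= (1 + d) * nsq u + (1 + d^-1) * nsq v.
Proof.
move=> d0.
have h := nsq_ge0 IP (d%:C *: u - v).
rewrite nsqB nsqZ Re_ipZl in h.
rewrite nsqD.
have h2 : 2 * Re (ip u v) <= d * nsq u + d^-1 * nsq v.
  have h3 : d * (2 * Re (ip u v)) <= d * (d * nsq u + d^-1 * nsq v).
    rewrite mulrDr (mulrA d d^-1) mulfV ?gt_eqF // mul1r; nra.
  by rewrite ler_pM2l in h3.
lra.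
Qed.
End NSQ.

Section Proj.
Variables (R : realType) (H : lmodType R[i]) (ip : H -> H -> R[i]).
Hypothesis IP : is_inner_product ip.
Variable V : H -> H.
Hypothesis iso : Defs.isometry ip V.
Local Notation nsq := (nsqd ip).

Lemma nsqV z : nsq (V z) = nsq z.
Proof. by rewrite /nsqd (ipVV iso). Qed.

Lemma nsqZc (t : R[i]) z : nsq (t *: z) = ((Re t) ^+ 2 + (Im t) ^+ 2) * nsq z.
Proof.
by rewrite /nsqd (ipZl IP) (ipZr IP) mulrA mulcJ (ipxx IP) -rmorphM /=.
Qed.

Lemma sqnorm_ge0 (c : R[i]) : 0 <= (Re c) ^+ 2 + (Im c) ^+ 2.
Proof. by rewrite addr_ge0 // sqr_ge0. Qed.

Lemma sqnorm_eq0 (c : R[i]) : (Re c) ^+ 2 + (Im c) ^+ 2 = 0 -> c = 0.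
Proof.
move=> h.
have h1 : (Re c) ^+ 2 = 0 by apply/eqP; rewrite eq_le sqr_ge0 andbT; have := sqr_ge0 (Im c); lra.
have h2 : (Im c) ^+ 2 = 0 by apply/eqP; rewrite eq_le sqr_ge0 andbT; have := sqr_ge0 (Re c); lra.
move/eqP: h1; move/eqP: h2; rewrite !sqrf_eq0 => /eqP h2 /eqP h1.
by apply/eqP; rewrite eq_complex h1 h2 !eqxx.
Qed.

Lemma wandering (comp : complete_space ip) (y : H) (ny : forall x, V x <> y) :
  exists e, nsq e = 1 /\ forall w, ip (V w) e = 0.
Proof.
pose D x := nsq (y - V x).
pose S := fun r : R => exists x, r = D x.
have hinf : classical_sets.has_inf S.
  split; first by exists (D 0), 0.
  by exists 0 => r [x ->]; apply: nsq_ge0.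
pose d := inf S.
have dle x : d <= D x by exact: (ge_inf hinf.2 (ex_intro _ x erefl)).
have d0 : 0 <= d.
  apply: lb_le_inf; first by exists (D 0), 0.
  by move=> r [x ->]; apply: nsq_ge0.
have near n : exists x, D x < d + (n.+1%:R)^-1.
  have np : 0 < (n.+1%:R : R)^-1 by rewrite invr_gt0 ltr0Sn.
  have [r [x ->] hr] := inf_adherent np hinf.
  by exists x.
pose xs n := xchoose (near n).
have Dxs n : D (xs n) < d + n.+1%:R^-1 := xchooseP (near n).
have cauchy_bd m n : nsq (xs m - xs n) <= 2 * (m.+1%:R^-1) + 2 * (n.+1%:R^-1).
  pose u := y - V (xs n); pose v := y - V (xs m).
  pose h := 2^-1 *: (xs n + xs m).
  have e1 : u - v = V (xs m - xs n).
    by rewrite /u /v (VB iso) opprB addrC addrA subrK.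
  have hh : (2^-1 + 2^-1 : R[i]) = 1.
    by rewrite [RHS](splitr 1) div1r.
  have e2 : u + v = (y - V h) + (y - V h).
    by rewrite /u /v /h (VZ iso) (VD iso) [LHS]addrACA [RHS]addrACA -!opprD -scalerDl hh scale1r.
  have := parallelogram IP u v.
  rewrite e1 e2 (nsq_sum2 IP) nsqV -/(D h) -/(D (xs n)) -/(D (xs m)).
  have := dle h; have := Dxs n; have := Dxs m.
  move: (D (xs m)) (D (xs n)) (D h) (nsq (xs m - xs n)) (m.+1%:R^-1 : R) (n.+1%:R^-1 : R) => a b c e p q.
  lra.
have cs : cauchy_seq ip xs.
  move=> e e0.
  have re0 : 0 < Re e by move: e0; rewrite ltcE => /andP[_].
  have eps0 : 0 < (Re e) ^+ 2 / 4 by rewrite divr_gt0 // exprn_gt0.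
  have [N hN] := eventually_small eps0.
  exists N => m n hm hn; rewrite (hnorm_lt IP) //.
  have := cauchy_bd m n; have := hN m hm; have := hN n hn.
  move: (nsq (xs m - xs n)) ((Re e) ^+ 2) (m.+1%:R^-1 : R) (n.+1%:R^-1 : R) => a b p q.
  lra.
have [x hx] := comp xs cs.
have conv : forall eps : R, 0 < eps -> exists N, forall n, (N <= n)%N -> nsq (xs n - x) < eps.
  move=> eps eps0.
  have s0 : 0 < (Num.sqrt eps)%:C by rewrite ltcR sqrtr_gt0.
  have [N hN] := hx _ s0.
  by exists N => n hn; have := hN n hn; rewrite (hnorm_lt IP) // ReC sqr_sqrtr // ltW.
have Dx_le : D x <= d.
  rewrite leNgt; apply/negP => hlt.
  pose g := D x - d.
  have g0 : 0 < g by rewrite /g subr_gt0.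
  pose dl := g / (4 * (d + 1)).
  have dl0 : 0 < dl by rewrite /dl divr_gt0 // mulr_gt0 //; lra.
  pose e1 := g / (4 * (1 + dl)).
  have e10 : 0 < e1 by rewrite /e1 divr_gt0 // mulr_gt0 //; lra.
  pose e2 := g / (4 * (1 + dl^-1)).
  have e20 : 0 < e2 by rewrite /e2 divr_gt0 // mulr_gt0 // addr_gt0 // invr_gt0.
  have [N1 h1] := eventually_small e10.
  have [N2 h2] := conv e2 e20.
  pose n := maxn N1 N2.
  have key : D x <= (1 + dl) * D (xs n) + (1 + dl^-1) * nsq (xs n - x).
    rewrite /D; have -> : y - V x = (y - V (xs n)) + V (xs n - x).
      by rewrite (VB iso) addrA subrK.
    by rewrite -(nsqV (xs n - x)); apply: amgm.
  have d1 : 0 < d + 1 by apply: (lt_le_trans ltr01); rewrite lerDr.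
  have dl1 : 0 < 1 + dl by apply: addr_gt0.
  have dl2 : 0 < 1 + dl^-1 by rewrite addr_gt0 // invr_gt0.
  have ea : (1 + dl) * e1 = g / 4.
    by rewrite /e1; field; apply: lt0r_neq0.
  have eb : (1 + dl^-1) * e2 = g / 4.
    by rewrite /e2; field; rewrite !lt0r_neq0 // addrC.
  have ec : dl * (d + 1) = g / 4.
    by rewrite /dl; field; apply: lt0r_neq0.
  have hn1 := h1 n (leq_maxl _ _).
  have hn2 := h2 n (leq_maxr _ _).
  have hD := Dxs n.
  have p1 : (1 + dl) * D (xs n) <= (1 + dl) * (d + e1).
    apply: ler_wpM2l; first exact: ltW.
    by apply: ltW; apply: (lt_trans hD); rewrite ltrD2l.
  have p2 : (1 + dl^-1) * nsq (xs n - x) <= (1 + dl^-1) * e2.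
    by apply: ler_wpM2l; [exact: ltW | exact: ltW].
  have gdef : g = D x - d by [].
  move: key p1 p2 ea eb ec gdef dl0 d0.
  generalize (D x) (D (xs n)) (nsq (xs n - x)) g dl e1 e2 d (dl^-1) => a b c g' dl' e1' e2' d' dli.
  move=> *; nra.
have orth : forall w, ip (y - V x) (V w) = 0.
  move=> w.
  pose c := ip (y - V x) (V w).
  pose q := nsq w.
  pose m := (Re c) ^+ 2 + (Im c) ^+ 2.
  pose s := (q + 1)^-1.
  have q0 : 0 <= q := nsq_ge0 IP w.
  have s0 : 0 < s by rewrite /s invr_gt0; apply: (lt_le_trans ltr01); rewrite lerDr.
  have sq : s * (q + 1) = 1 by rewrite /s mulVf // lt0r_neq0 //; apply: (lt_le_trans ltr01); rewrite lerDr.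
  have m0 : 0 <= m := sqnorm_ge0 c.
  have hD := dle (x + (s%:C * c) *: w).
  have eq : D (x + (s%:C * c) *: w) = D x + (s ^+ 2 * q - 2 * s) * m.
    rewrite /D (VD iso) (VZ iso) opprD addrA (nsqB IP) (nsqZc (s%:C * c) (V w)) nsqV (ipZr IP) -/c.
    have -> : (Re (s%:C * c)) ^+ 2 + (Im (s%:C * c)) ^+ 2 = s ^+ 2 * m.
      apply: (@complexI R); rewrite -mulcJ conjcM conjcR realCM -/m realCX -mulcJ; ring.
    rewrite conjcM conjcR -mulrA [conjc c * c]mulrC mulcJ -realCM ReC -/m -/q.
    ring.
  rewrite eq in hD.
  have hm : m = 0.
    have e3 : s ^+ 2 * q * m = s * m - s ^+ 2 * m.
      have : s * q = 1 - s by rewrite -sq; ring.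
      by move=> h; rewrite expr2 -(mulrA s s q) h; ring.
    have sm : 0 <= s ^+ 2 * m by rewrite mulr_ge0 // sqr_ge0.
    apply/eqP; rewrite eq_le m0 andbT.
    move: hD Dx_le e3 sm s0 m0.
    generalize (D x) d s q m => a b s' q' m'.
    move=> *; nra.
  exact: sqnorm_eq0 hm.
have nz : 0 < nsq (y - V x).
  rewrite lt_def (nsq_ge0 IP) andbT; apply/eqP => h0.
  apply: (ny x); have := nsq_eq0 IP h0; move/eqP; rewrite subr_eq0 => /eqP ->.
  by [].
pose r := Num.sqrt (nsq (y - V x)).
have r0 : 0 < r by rewrite /r sqrtr_gt0.
exists (r^-1%:C *: (y - V x)); split.
  rewrite nsqZ // exprVn /r sqr_sqrtr ?ltW // mulVf //; exact: lt0r_neq0.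
move=> w; rewrite (ipZr IP) (ipC IP) orth.
by rewrite /= oppr0 !mulr0 ?mul0r.
Qed.

End Proj.

Section Shift.
Variables (R : realType) (H : lmodType R[i]) (ip : H -> H -> R[i]).
Hypothesis IP : is_inner_product ip.
Variable V : H -> H.
Hypothesis iso : Defs.isometry ip V.
Local Notation nsq := (nsqd ip).
Variable e0 : H.
Hypothesis e0n : nsq e0 = 1.
Hypothesis e0o : forall w, ip (V w) e0 = 0.

Local Notation W n x := (iter n V x).

Lemma ipW p q x y : (q <= p)%N -> ip (W p x) (W q y) = ip (W (p - q) x) y.
Proof.
elim: q p => [|q IH] p hqp; first by rewrite subn0.
case: p hqp => [//|p] hqp.
by rewrite !iterS (ipV IP iso) IH // subSS.
Qed.

Lemma ipWW p x y : ip (W p x) (W p y) = ip x y.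
Proof. by rewrite ipW // subnn. Qed.

Lemma WZ p a x : W p (a *: x) = a *: W p x.
Proof. by elim: p => [//|p IH]; rewrite !iterS IH (VZ iso). Qed.

Lemma WD p x y : W p (x + y) = W p x + W p y.
Proof. by elim: p => [//|p IH]; rewrite !iterS IH (VD iso). Qed.

Lemma W_sum p n (F : 'I_n -> H) : W p (\sum_(j < n) F j) = \sum_(j < n) W p (F j).
Proof.
elim: n F => [|n IH] F.
  by rewrite !big_ord0; elim: p => [//|p IHp]; rewrite iterS IHp (V0 iso).
by rewrite !big_ord_recr /= WD IH.
Qed.

Definition f n := W n e0.
Arguments f : simpl never.

Lemma ip_f n m : ip (f n) (f m) = (n == m)%:R.
Proof.
rewrite /f.
have [lt|gt|->] := ltngtP n m; last by rewrite ipWW (ipxx IP) e0n /=; reflexivity.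
- have e : (m - n = (m - n).-1.+1)%N by rewrite prednK // subn_gt0.
  rewrite (ipC IP) (ipW _ _ (ltnW lt)) e iterS e0o /= oppr0; reflexivity.
- have e : (n - m = (n - m).-1.+1)%N by rewrite prednK // subn_gt0.
  rewrite (ipW _ _ (ltnW gt)) e iterS e0o /=; reflexivity.
Qed.

Variable w : R[i].
Hypothesis wn : w * conjc w = 1.

Definition gs s K := \sum_(i < K) w ^+ i *: f (s + i).
Arguments gs : simpl never.

Lemma W_gs m s K : W m (gs s K) = gs (m + s) K.
Proof.
rewrite /gs W_sum; apply: eq_bigr => i _.
by rewrite WZ /f -iterD addnA.
Qed.

Lemma V_gs s K : V (gs s K) = gs s.+1 K.
Proof. by have := W_gs 1 s K. Qed.

Lemma ip_gs_f s K j : ip (gs s K) (f j) = if (s <= j < s + K)%N then w ^+ (j - s) else 0.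
Proof.
elim: K => [|K IH].
  rewrite /gs big_ord0 (ip0l IP) addn0 ltnNge andbN; reflexivity.
rewrite /gs big_ord_recr /= (ipDl IP) -/(gs s K) IH (ipZl IP) ip_f addnS ltnS.
have [lt|gt|eq] := ltngtP (s + K) j.
- rewrite !andbF /= mulr0n mulr0 addr0; reflexivity.
- rewrite !andbT /= mulr0n mulr0 addr0; reflexivity.
- rewrite -eq leq_addr /= mulr1n mulr1 add0r addKn; reflexivity.
Qed.

Lemma conjcX (a : R[i]) n : conjc (a ^+ n) = (conjc a) ^+ n.
Proof. exact: rmorphXn. Qed.

Lemma wn' : conjc w * w = 1. Proof. by rewrite mulrC. Qed.

Lemma ip_gs_gs_disj s K t L : (t + L <= s)%N -> ip (gs s K) (gs t L) = 0.
Proof.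
move=> h; rewrite /gs (ip_sumr IP) -/(gs s K); apply: big1 => i _.
rewrite (ipZr IP) ip_gs_f.
have -> : (s <= t + i)%N = false.
  by apply/negbTE; rewrite -ltnNge; apply: (leq_trans _ h); rewrite ltn_add2l.
rewrite /= mulr0; reflexivity.
Qed.

Lemma ip_gs_gs_disj' s K t L : (s + K <= t)%N -> ip (gs s K) (gs t L) = 0.
Proof. by move=> h; rewrite (ipC IP) ip_gs_gs_disj //= oppr0. Qed.

Lemma ip_gs_gs_same s K : ip (gs s K) (gs s K) = K%:R.
Proof.
rewrite {2}/gs (ip_sumr IP).
rewrite (eq_bigr (fun _ => 1)); last first.
  move=> i _; rewrite (ipZr IP) ip_gs_f leq_addr ltn_add2l ltn_ord /= addKn.
  by rewrite conjcX -exprMn wn' expr1n.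
by rewrite sumr_const card_ord.
Qed.

Lemma ip_gs_shift K : ip (gs 1 K.+1) (gs 0 K.+1) = K%:R * conjc w.
Proof.
rewrite {2}/gs (ip_sumr IP) big_ord_recl /= (ipZr IP) ip_gs_f /= mulr0 add0r.
rewrite (eq_bigr (fun _ => conjc w)); last first.
  move=> i _; rewrite (ipZr IP) ip_gs_f /bump leq0n /= add0n add1n !ltnS (ltnW (ltn_ord i)) subn1 /=.
  by rewrite conjcX exprS -mulrA -exprMn wn' expr1n mulr1.
by rewrite sumr_const card_ord mulr_natl.
Qed.

Lemma ip2 (a b c d : R[i]) u1 u2 v1 v2 :
  ip (a *: u1 + b *: u2) (c *: v1 + d *: v2) =
  a * conjc c * ip u1 v1 + a * conjc d * ip u1 v2 + b * conjc c * ip u2 v1 + b * conjc d * ip u2 v2.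
Proof.
rewrite !(ipDl IP) !(ipDr IP) !(ipZl IP) !(ipZr IP).
ring.
Qed.

Variables (K : nat) (a b : R[i]).
Definition x0 := a *: gs 0 K + b *: gs K.+1 1.

Lemma ip_x0 : ip x0 x0 = a * conjc a * K%:R + b * conjc b.
Proof.
rewrite /x0 ip2 !ip_gs_gs_same ip_gs_gs_disj' // ip_gs_gs_disj //.
by rewrite !mulr0 !addr0 mulr1.
Qed.

Lemma W_x0 m : W m x0 = a *: gs m K + b *: gs (m + K.+1) 1.
Proof. by rewrite /x0 WD !WZ !W_gs addn0. Qed.

Lemma ipW_x0 m : (K.+2 <= m)%N -> ip (W m x0) x0 = 0.
Proof.
move=> hm; rewrite W_x0 /x0 ip2.
rewrite (@ip_gs_gs_disj m K 0 K) ?(@ip_gs_gs_disj m K K.+1 1) ?(@ip_gs_gs_disj (m + K.+1) 1 0 K)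
  ?(@ip_gs_gs_disj (m + K.+1) 1 K.+1 1); try lia.
by rewrite !mulr0 !addr0.
Qed.

Lemma ipV_x0 : ip (V x0) x0 = a * conjc a * ip (gs 1 K) (gs 0 K).
Proof.
have -> : V x0 = W 1 x0 by [].
rewrite W_x0 /x0 ip2.
rewrite (@ip_gs_gs_disj' 1 K K.+1 1) ?(@ip_gs_gs_disj (1 + K.+1) 1 0 K)
  ?(@ip_gs_gs_disj (1 + K.+1) 1 K.+1 1); try lia.
by rewrite !mulr0 !addr0.
Qed.
End Shift.

Lemma sum_delta (R : realType) k (F : 'I_k -> R[i]) (l : 'I_k) :
  \sum_(j < k) F j * ((j : nat) == l)%:R = F l.
Proof.
rewrite (bigD1 l) //= eqxx mulr1 big1 ?addr0 // => j hj.
have -> : ((j : nat) == l) = false by exact: negbTE hj.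
by rewrite mulr0.
Qed.

Section Family.
Variables (R : realType) (H : lmodType R[i]) (ip : H -> H -> R[i]).
Hypothesis IP : is_inner_product ip.
Variable V : H -> H.
Hypothesis iso : Defs.isometry ip V.
Variables (x0 : H) (L : nat).
Hypothesis hx0 : ip x0 x0 = 1.
Hypothesis hW : forall m, (L <= m)%N -> ip (iter m V x0) x0 = 0.
Local Notation W n x := (iter n V x).

Definition xs (j : nat) := W (j * L.+1) x0.
Definition lam := ip (V x0) x0.

Lemma ip_xs i j : ip (xs i) (xs j) = (i == j)%:R.
Proof.
rewrite /xs; have [lt|gt|->] := ltngtP i j.
- rewrite (ipC IP) (ipW IP iso) ?hW /= ?oppr0; [reflexivity | nia | nia].
- rewrite (ipW IP iso) ?hW /=; [reflexivity | nia | nia].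
- rewrite (ipWW IP iso) hx0 /=; reflexivity.
Qed.

Lemma ipV_xs i j : ip (V (xs i)) (xs j) = lam * (i == j)%:R.
Proof.
rewrite /xs -iterS; have [lt|gt|->] := ltngtP i j.
- rewrite (ipC IP) (ipW IP iso) ?hW /= ?oppr0 ?mulr0; [reflexivity | nia | nia].
- rewrite (ipW IP iso) ?hW /= ?mulr0; [reflexivity | nia | nia].
- rewrite (ipW IP iso) // subSn // subnn /= mulr1; reflexivity.
Qed.

Variable k : nat.
Definition Pr (y : H) := \sum_(j < k) ip y (xs j) *: xs j.

Lemma ip_Pr_xs y (l : 'I_k) : ip (Pr y) (xs l) = ip y (xs l).
Proof.
rewrite /Pr (ip_suml IP) (eq_bigr (fun j : 'I_k => ip y (xs j) * ((j : nat) == l)%:R)).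
  by rewrite sum_delta.
by move=> j _; rewrite (ipZl IP) ip_xs.
Qed.

Lemma Pr_xs (l : 'I_k) : Pr (xs l) = xs l.
Proof.
rewrite /Pr (eq_bigr (fun j : 'I_k => ((l : nat) == j)%:R *: xs j)); last by move=> j _; rewrite ip_xs.
rewrite (bigD1 l) //= eqxx scale1r big1 ?addr0 // => j hj.
have -> : ((l : nat) == j) = false by rewrite eq_sym; exact: negbTE hj.
by rewrite scale0r.
Qed.

Lemma Pr_lin a x y : Pr (a *: x + y) = a *: Pr x + Pr y.
Proof.
rewrite /Pr scaler_sumr -big_split; apply: eq_bigr => j _.
by rewrite (ipDl IP) (ipZl IP) scalerDl scalerA.
Qed.

Lemma Pr_idem y : Pr (Pr y) = Pr y.
Proof. by rewrite {1}/Pr; apply: eq_bigr => j _; rewrite ip_Pr_xs. Qed.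

Lemma Pr_sa x y : ip (Pr x) y = ip x (Pr y).
Proof.
rewrite /Pr (ip_suml IP) (ip_sumr IP); apply: eq_bigr => j _.
by rewrite (ipZl IP) (ipZr IP) -(ipC IP) mulrC.
Qed.

Lemma Pr_comp y : Pr (V (Pr y)) = lam *: Pr y.
Proof.
rewrite {1}/Pr scaler_sumr; apply: eq_bigr => l _.
rewrite scalerA; congr (_ *: _).
rewrite /Pr (V_sum iso) (ip_suml IP).
rewrite (eq_bigr (fun j : 'I_k => (ip y (xs j) * lam) * ((j : nat) == l)%:R)).
  by rewrite sum_delta mulrC.
by move=> j _; rewrite (VZ iso) (ipZl IP) ipV_xs mulrA.
Qed.

Lemma in_range : higher_rank_num_range ip k V lam.
Proof.
exists Pr; split.
- split; [exact: Pr_lin | exact: Pr_idem | exact: Pr_sa].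
- exists (fun j : 'I_k => xs j); split.
  + move=> c hc l.
    have := congr1 (fun u => ip u (xs l)) hc; rewrite /= (ip0l IP) (ip_suml IP).
    rewrite (eq_bigr (fun j : 'I_k => c j * ((j : nat) == l)%:R)); last by move=> j _; rewrite (ipZl IP) ip_xs.
    by rewrite sum_delta.
  + by move=> j; exists (xs j); rewrite Pr_xs.
  + by move=> x; exists (fun j => ip x (xs j)).
- by move=> x; rewrite Pr_comp.
Qed.
End Family.

Section Norms.
Variable R : realType.
Definition nr (c : R[i]) : R := Num.sqrt ((Re c) ^+ 2 + (Im c) ^+ 2).
Lemma normE (c : R[i]) : `|c| = (nr c)%:C.
Proof. exact: normc_def. Qed.
Lemma nr_ge0 c : 0 <= nr c. Proof. exact: sqrtr_ge0. Qed.
Lemma one_C : (1 : R[i]) = (1 : R)%:C. Proof. reflexivity. Qed.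
Lemma nr_real (t : R) : 0 <= t -> nr t%:C = t.
Proof. by move=> t0; rewrite /nr /= expr0n /= addr0 sqrtr_sqr ger0_norm. Qed.
Lemma realC_nat n : ((n%:R : R)%:C) = n%:R :> R[i].
Proof. exact: rmorph_nat. Qed.
End Norms.

Section Main.
Variables (R : realType) (H : lmodType R[i]) (ip : H -> H -> R[i]).
Hypothesis IP : is_inner_product ip.
Variable V : H -> H.
Hypothesis iso : Defs.isometry ip V.
Local Notation nsq := (nsqd ip).

Lemma unit_vec (v : H) : v <> 0 -> exists u, nsq u = 1 /\ exists a : R[i], u = a *: v.
Proof.
move=> v0.
have nz : 0 < nsq v.
  rewrite lt_def (nsq_ge0 IP) andbT; apply/eqP => h0; exact: v0 (nsq_eq0 IP h0).
pose r := Num.sqrt (nsq v).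
have r0 : 0 < r by rewrite /r sqrtr_gt0.
exists (r^-1%:C *: v); split; last by exists (r^-1%:C).
rewrite (nsqZ IP) exprVn /r sqr_sqrtr ?ltW // mulVf //; exact: lt0r_neq0.
Qed.

Lemma range_bound k (l : R[i]) : (0 < k)%N -> higher_rank_num_range ip k V l -> `|l| <= 1.
Proof.
move=> k0 [P [[Plin Pid Psa] [v [vli vrange vspan]] Pc]].
pose j0 : 'I_k := Ordinal k0.
have P0 : P 0 = 0.
  have h := Plin 1 0 0; rewrite !scale1r addr0 in h.
  by apply/(addrI (P 0)); rewrite addr0 -h.
have v0 : v j0 <> 0.
  move=> h.
  have hs : \sum_(j < k) ((j == j0)%:R : R[i]) *: v j = v j0.
    rewrite (bigD1 j0) // eqxx scale1r big1 => [|j /negbTE ->]; first exact: addr0.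
    by rewrite scale0r.
  have := vli (fun j => (j == j0)%:R); rewrite hs h => /(_ erefl j0).
  rewrite eqxx => /eqP; rewrite oner_eq0.
  by [].
have [u [un [a ua]]] := unit_vec v0.
have [x0 hx0] := vrange j0.
have Pu : P u = u.
  have := Plin a (v j0) 0; rewrite addr0 P0 addr0 -ua => ->.
  by rewrite -hx0 Pid hx0 -ua.
have hl : ip (V u) u = l.
  have := Pc u; rewrite Pu => h.
  have := Psa (V u) u; rewrite h (ipZl IP) Pu (ipxx IP) un mulr1 => <-.
  reflexivity.
pose m := (Re l) ^+ 2 + (Im l) ^+ 2.
have m1 : m <= 1.
  have := nsq_ge0 IP (V u - l *: u).
  rewrite (nsqB IP) (nsqV iso) (nsqZc IP) un (ipZr IP) hl -/m.
  rewrite [conjc l * l]mulrC mulcJ -/m ReC; lra.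
rewrite normE one_C lecR /nr -/m.
have := sqrtr_ge0 m; have := sqr_sqrtr (sqnorm_ge0 l); rewrite -/m.
move: (Num.sqrt m) => t ht t0; nra.
Qed.

Lemma closure_bound k (z : R[i]) : (0 < k)%N ->
  in_closure (higher_rank_num_range ip k V) z -> `|z| <= 1.
Proof.
move=> k0 hc.
rewrite normE one_C lecR leNgt; apply/negP => hz.
have e0 : 0 < (nr z - 1)%:C by rewrite ltcR subr_gt0.
have [w [Sw hw]] := hc _ e0.
have w1 := range_bound k0 Sw.
rewrite normE one_C lecR in w1.
rewrite normE ltcR in hw.
have := ler_normD w (z - w); rewrite addrC subrK !normE -realCD lecR.
lra.
Qed.
End Main.

Section Main2.
Variables (R : realType) (H : lmodType R[i]) (ip : H -> H -> R[i]).
Hypothesis IP : is_inner_product ip.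
Variable V : H -> H.
Hypothesis iso : Defs.isometry ip V.
Local Notation nsq := (nsqd ip).
Variable e0 : H.
Hypothesis e0n : nsq e0 = 1.
Hypothesis e0o : forall w, ip (V w) e0 = 0.

Lemma disk_in_closure k (z : R[i]) : `|z| <= 1 -> in_closure (higher_rank_num_range ip k V) z.
Proof.
move=> hz e he.
have hz' : nr z <= 1 by move: hz; rewrite normE one_C lecR.
pose r := nr z.
have r0 : 0 <= r := nr_ge0 z.
have ee : e = (Re e)%:C by move: he; rewrite ltcE; case: e => x y /= /andP[/eqP -> _].
have re0 : 0 < Re e by move: he; rewrite ltcE => /andP[_].
have zz : z * conjc z = (r ^+ 2)%:C by rewrite mulcJ /r /nr sqr_sqrtr // sqnorm_ge0.
pose om := if r == 0 then 1 else (r^-1)%:C * z.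
have [omn zr] : om * conjc om = 1 /\ z = r%:C * om.
  rewrite /om; case: (eqVneq r 0) => hr.
  - have z0 : z = 0.
      apply: sqnorm_eq0; have := sqr_sqrtr (sqnorm_ge0 z); rewrite -/(nr z) -/r hr expr0n /=.
      by move=> <-.
    rewrite z0 hr /= mul1r oppr0 mulr1; split; reflexivity.
  - split.
      rewrite conjcM conjcR mulrACA zz -!realCM [RHS]one_C; congr (_%:C).
      by field.
    by rewrite mulrA -realCM mulfV // mul1r.
pose w := conjc om.
have wn : w * conjc w = 1 by rewrite /w conjcK mulrC.
have [N hN] := eventually_small re0.
have hK := hN N (leqnn N).
pose K := N.+1.
have K0 : (K%:R : R) != 0 by rewrite pnatr_eq0.
have rK0 : 0 <= r / K%:R by rewrite divr_ge0 // ler0n.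
pose a := (Num.sqrt (r / K%:R))%:C.
pose b := (Num.sqrt (1 - r))%:C.
have aa : a * conjc a = (r / K%:R)%:C.
  by rewrite /a conjcR -realCM -expr2 sqr_sqrtr.
have bb : b * conjc b = (1 - r)%:C.
  by rewrite /b conjcR -realCM -expr2 sqr_sqrtr // subr_ge0.
pose y0 := x0 V e0 w K a b.
have hy0 : ip y0 y0 = 1.
  rewrite /y0 (ip_x0 IP iso e0n e0o wn) aa bb -realC_nat -realCM -realCD one_C.
  by congr (_%:C); field.
have hW : forall m, (K.+2 <= m)%N -> ip (iter m V y0) y0 = 0.
  by move=> m hm; apply: (ipW_x0 IP iso e0n e0o).
have Hin := in_range IP iso hy0 hW k.
exists (lam ip V y0); split => //.
have hl : lam ip V y0 = (r / K%:R)%:C * ((N%:R : R)%:C * om).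
  rewrite /lam /y0 (ipV_x0 IP iso e0n e0o) aa (ip_gs_shift IP iso e0n e0o wn) realC_nat.
  by rewrite /w conjcK.
have hid : r - r / K%:R * N%:R = r / K%:R.
  rewrite /K -addn1 natrD; field.
  by rewrite natr1 pnatr_eq0.
have hdiff : z - lam ip V y0 = (r / K%:R)%:C * om.
  rewrite hl {1}zr mulrA -realCM -mulrBl -realCB hid; reflexivity.
have om1 : `|om| = 1.
  rewrite normE one_C; congr (_%:C).
  have : ((Re om) ^+ 2 + (Im om) ^+ 2)%:C = (1 : R)%:C by rewrite -mulcJ omn.
  by move/complexI; rewrite /nr => ->; rewrite sqrtr1.
rewrite hdiff normrM om1 mulr1 normE nr_real // ee ltcR.
apply: le_lt_trans hK.
by rewrite -[X in _ <= X]mul1r ler_pM2r // invr_gt0 ltr0n.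
Qed.
End Main2.

Theorem corollary2p7 (R : realType) (H : lmodType R[i]) (ip : H -> H -> R[i])
  (V : H -> H) (k : nat) :
  inf_dim_separable_Hilbert ip -> proper_isometry ip V -> (0 < k)%N ->
  forall z : R[i], in_closure (higher_rank_num_range ip k V) z <-> `|z| <= 1.
Proof.
move=> [IP comp _ _] [iso nu] k0 z; split; first exact: closure_bound.
have [y ny] : exists y, forall x, V x <> y.
  apply: NNPP => h; apply: nu; split => // y'.
  apply: NNPP => h2; apply: h; exists y' => x hx; apply: h2; exists x; exact: hx.
have [e0 [e0n e0o]] := wandering IP iso comp ny.
exact: (disk_in_closure IP iso e0n e0o).
Qed.
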